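(* Let $q$ be a prime number, let $l\ge 2$ be an integer and let $N=q^{l}$. Then $$\mathbb{Z}\text{-}\mathcal{KS}(N)=\{\,q+d,\ q-d\;:\; d \text{ a positive integer with } d\mid (q^{l}-q)\}\setminus\{0,N\}.$$
   Context: Every nonzero rational $\alpha$ is written $\alpha=\alpha_1/\alpha_2$ with $\alpha_1\in\mathbb{Z}$, $\alpha_2$ a positive integer and $\gcd(\alpha_1,\alpha_2)=1$ (for $\alpha\in\mathbb{Z}$ this means $\alpha_2=1$). For an integer $N\ge 2$ and a nonzero rational $\alpha=\alpha_1/\alpha_2$, $N$ is called an $\alpha$-Korselt number if $N\neq\alpha$ and $\alpha_2p-\alpha_1$ divides $\alpha_2N-\alpha_1$ (in $\mathbb{Z}$) for every prime divisor $p$ of $N$. For a subset $\mathbb{A}\subseteq\mathbb{Q}$, the Korselt set $\mathbb{A}\text{-}\mathcal{KS}(N)$ is the set of all $\beta\in\mathbb{A}\setminus\{0,N\}$ such that $N$ is a $\beta$-Korselt number. *)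

(* Defs.v *)
From mathcomp Require Import all_boot all_order all_algebra.
Set Implicit Arguments. Unset Strict Implicit. Unset Printing Implicit Defensive.
Import Order.TTheory GRing.Theory Num.Theory.
Local Open Scope ring_scope.

(* alpha = alpha1/alpha2 in lowest terms with alpha2 > 0:
   alpha1 = numq alpha, alpha2 = denq alpha (mathcomp's rat is normalized). *)
Definition alpha_Korselt (N : nat) (alpha : rat) : Prop :=
  (N%:Q != alpha) /\
  forall p : nat, prime p -> (p %| N)%N ->
    (denq alpha * p%:Z - numq alpha %| denq alpha * N%:Z - numq alpha)%Z.

Definition ZKS (N : nat) (beta : int) : Prop :=
  beta != 0 /\ beta != N%:Z /\ alpha_Korselt N beta%:Q.

(* Main.v *)
Require Import Defs.
From mathcomp Require Import all_boot all_order all_algebra.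
From mathcomp Require Import zify.
Import Order.TTheory GRing.Theory Num.Theory.
Local Open Scope ring_scope.

Lemma key (q l : nat) (beta : int) : (q <= q ^ l)%N ->
  (1 * q%:Z - beta %| 1 * (q ^ l)%N%:Z - beta)%Z =
  ((q%:Z - beta) %| ((q ^ l - q)%N)%:Z)%Z.
Proof.
move=> h.
have -> : 1 * (q ^ l)%N%:Z - beta = ((q ^ l - q)%N)%:Z + (q%:Z - beta).
  rewrite mul1r; lia.
rewrite mul1r rpredDr //.
Qed.

Theorem theorem3p2 (q l : nat) (hq : prime q) (hl : (2 <= l)%N) (beta : int) :
  ZKS (q ^ l) beta <->
  ((exists d : nat, (0 < d)%N /\ (d %| q ^ l - q)%N /\
       (beta = q%:Z + d%:Z \/ beta = q%:Z - d%:Z))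
   /\ beta != 0 /\ beta != (q ^ l)%N%:Z).
Proof.
have q2 : (2 <= q)%N by apply: prime_gt1.
have qlt : (q < q ^ l)%N.
  have : (q ^ 1 < q ^ l)%N by rewrite ltn_exp2l.
  by rewrite expn1.
have qdv : (q %| q ^ l)%N by rewrite Euclid_dvdX // dvdnn; lia.
rewrite /ZKS /alpha_Korselt numq_int denq_int.
split.
- move=> [b0 [bN [_ H]]].
  have := H q hq qdv; rewrite key; last by lia.
  rewrite dvdzE absz_nat => hd.
  split; last by split.
  exists `|q%:Z - beta|%N; split; last split => //.
  + case: (posnP `|q%:Z - beta|%N) hd => // -> ; rewrite dvd0n; lia.
  + lia.
- move=> [[d [d0 [dd hb]]] [b0 bN]].
  split => //; split => //; split.
    by rewrite eqr_int; apply/eqP => /eqP; rewrite eq_sym; apply/negP; rewrite (negbTE bN).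
  move=> p pp pd.
  have pq : p = q.
    move: pd; rewrite Euclid_dvdX // => /andP [+ _].
    by rewrite dvdn_prime2 // => /eqP.
  subst p; rewrite key; last by lia.
  rewrite dvdzE absz_nat.
  have -> : `|q%:Z - beta|%N = d by case: hb => ->; lia.
  exact: dd.
Qed.
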